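(* Let $N$ be a finite $\Lambda$-module with $|N/(1-t)N|=l$. Then there exists a finite $\Lambda$-module $M$ containing $N$ as a $\Lambda$-submodule such that $|M/N|=l$ and $(1-t)M=N$.
   Context: $\Lambda=\mathbb Z[t,t^{-1}]$, the ring of Laurent polynomials over $\mathbb Z$. A $\Lambda$-module is an abelian group with an automorphism by which $t$ acts. *)

(* Defs.v *)
From HB Require Import structures.
From mathcomp Require Import all_boot all_order all_algebra all_fingroup.
Set Implicit Arguments. Unset Strict Implicit. Unset Printing Implicit Defensive.
Import GRing.Theory.
Local Open Scope ring_scope.

(* A finite Lambda-module (Lambda = Z[t,t^-1]) is a finite abelian group V
   (finZmodType) together with an additive automorphism t : V -> V. *)

Definition one_minus_t_image (V : finZmodType) (t : V -> V) : {set V} :=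
  [set x - t x | x in [set: V]].

(* Main.v *)
Require Import Defs.
From HB Require Import structures.
From mathcomp Require Import all_boot all_order all_algebra all_fingroup.
Import GRing.Theory.
From mathcomp Require Import zify.
Set Implicit Arguments. Unset Strict Implicit. Unset Printing Implicit Defensive.
Local Open Scope ring_scope.
Section Ext.
Variables (N : finZmodType) (d' : nat) (k0 : N).
Local Notation d := d'.+1.

Definition ext_ (k : N) : Type := (N * 'I_d)%type.
Local Notation ext := (ext_ k0).
HB.instance Definition _ := Finite.on ext.

Definition eadd (p q : ext) : ext :=
  (p.1 + q.1 + k0 *+ ((p.2 + q.2) %/ d), inZp (p.2 + q.2)).
Definition eopp (p : ext) : ext := (- p.1 - k0 *+ (0 < p.2)%N, inZp (d - p.2)).
Definition ezero : ext := (0, ord0).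

Lemma divD_aux a b : (a %/ d + (b + a %% d) %/ d = (b + a) %/ d)%N.
Proof.
by rewrite {3}(divn_eq a d) addnCA divnMDl.
Qed.

Lemma eaddA : associative eadd.
Proof.
move=> [a i] [b j] [c k]; rewrite /eadd /=; congr (_, _).
  rewrite -!addrA; congr (_ + _); congr (_ + _).
  rewrite [RHS]addrCA; congr (_ + _).
  rewrite -!mulrnDr; congr (_ *+ _).
  rewrite (divD_aux (j + k) i) [((i + j) %% d + k)%N]addnC (divD_aux (i + j) k).
  by rewrite addnA addnC.
by apply: val_inj => /=; rewrite modnDmr modnDml addnA.
Qed.

Lemma eaddC : commutative eadd.
Proof. by move=> [a i] [b j]; rewrite /eadd /= addnC (addrC a). Qed.

Lemma eadd0 : left_id ezero eadd.
Proof.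
move=> [a i]; rewrite /eadd /= add0n add0r divn_small // addr0; congr (_, _).
by apply: val_inj => /=; rewrite modn_small.
Qed.

Lemma eaddN : left_inverse ezero eopp eadd.
Proof.
move=> [a i]; rewrite /eadd /eopp /=.
case: i => [[|i] Hi] /=.
  rewrite subn0 modnn addn0 div0n addr0 subr0 addNr; congr (_, _).
  by apply: val_inj.
rewrite modn_small ?subn_gt0 // ?ltn_subrL // subnK; last exact: ltnW.
rewrite divnn /= addrAC subrK addNr; congr (_,_).
by apply: val_inj; rewrite /= modnn.
Qed.

HB.instance Definition _ := GRing.isZmodule.Build ext eaddA eaddC eadd0 eaddN.

Lemma eaddE (p q : ext) : p + q = eadd p q. Proof. by []. Qed.
Lemma eoppE (p : ext) : - p = eopp p. Proof. by []. Qed.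
Lemma ezeroE : (0 : ext) = ezero. Proof. by []. Qed.

Lemma esub_same (a b : N) (j : 'I_d) : ((a, j) : ext) - ((b, j) : ext) = ((a - b, ord0) : ext).
Proof.
rewrite eaddE eoppE /eadd /eopp /=; congr (_, _); last first.
  by apply: val_inj => /=; rewrite modnDmr subnKC ?modnn // ltnW.
case: j => [[|j] Hj] /=.
  by rewrite subn0 modnn addn0 div0n subr0 addr0.
rewrite modn_small ?subnKC ?divnn // ?ltn_subrL //; last exact: ltnW.
by rewrite ltn0Sn addrA subrK.
Qed.

Variables (t : {additive N -> N}) (x : N).
Hypothesis hk : k0 - t k0 = x *+ d.

Definition es_ (_ : k0 - t k0 = x *+ d) (p : ext) : ext := (t p.1 - x *+ p.2, p.2).
Local Notation es := (es_ hk).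

Lemma es_nmod : nmod_morphism es.
Proof.
split.
  by rewrite ezeroE /es /ezero /= raddf0 subr0.
move=> [a i] [b j]; rewrite !eaddE /es /eadd /=; congr (_, _).
rewrite !raddfD /= raddfMn /=.
rewrite addrACA -opprD -mulrnDr.
have -> : x *+ (i + j) = (k0 - t k0) *+ ((i+j) %/ d) + x *+ ((i+j) %% d).
  by rewrite hk -mulrnA mulnC -mulrnDr -divn_eq.
rewrite mulrnBl; move: (t a) (t b) (k0 *+ _) (t k0 *+ _) (x *+ _) => A B K C R.
by rewrite opprD opprB -[RHS]addrA [C - K - R + K]addrAC subrK !addrA.
Qed.
HB.instance Definition _ := GRing.isNmodMorphism.Build ext ext es es_nmod.


Definition ei (a : N) : ext := (a, ord0).
Lemma ei_nmod : nmod_morphism ei.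
Proof.
split; first by [].
move=> a b; rewrite eaddE /eadd /ei /= addr0; congr (_, _).
by apply: val_inj.
Qed.
HB.instance Definition _ := GRing.isNmodMorphism.Build N ext ei ei_nmod.

Lemma ei_inj : injective ei.
Proof. by move=> a b [->]. Qed.

Lemma ei_t a : ei (t a) = es (ei a).
Proof. by rewrite /ei /es /= subr0. Qed.

Lemma es_bij : bijective t -> bijective es.
Proof.
move=> /bij_inj tinj; apply: injF_bij => -[a i] [b j] [e1 e2].
subst j; move/addIr/tinj: e1 => ->; by [].
Qed.

Lemma card_ext : #|(ext : finType)| = (#|N| * d)%N.
Proof. by rewrite card_prod card_ord. Qed.

Lemma es_image : one_minus_t_image es =
  ei @: [set a - t a + x *+ (nat_of_ord j) | a in [set: N], j in [set: 'I_d]].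
Proof.
apply/setP=> y; apply/imsetP/imsetP.
  case=> -[a j] _ ->; exists (a - t a + x *+ j); first by apply/imset2P; exists a j.
  have -> : es (a, j) = ((t a - x *+ j, j) : ext) by [].
  by rewrite esub_same opprB addrA addrAC.
case=> z /imset2P [a j _ _ ->] ->; exists (a, j); first by [].
have -> : es (a, j) = ((t a - x *+ j, j) : ext) by [].
by rewrite esub_same opprB addrA addrAC.
Qed.
End Ext.
Section Props.
Variables (N : finZmodType) (t : {additive N -> N}).
Local Notation K := (one_minus_t_image t).

Lemma K0 : 0 \in K.
Proof. by apply/imsetP; exists 0; rewrite ?inE // raddf0 subr0. Qed.

Lemma KB a b : a \in K -> b \in K -> a - b \in K.
Proof.
move=> /imsetP [u _ ->] /imsetP [v _ ->]; apply/imsetP; exists (u - v); first by [].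
rewrite [t (u - v)]raddfB; move: (t u) (t v) => A B.
by rewrite !opprB !addrA [u - A + B]addrAC [u - v + B]addrAC [RHS]addrAC.
Qed.

Lemma KN a : a \in K -> - a \in K.
Proof. by move=> aK; rewrite -sub0r KB // K0. Qed.

Lemma KD a b : a \in K -> b \in K -> a + b \in K.
Proof. by move=> aK bK; rewrite -[b]opprK KB // KN. Qed.
End Props.

Definition Pgen (N : finZmodType) (t : {additive N -> N}) (L : {set N}) :=
  exists (M : finZmodType) (s : {additive M -> M}) (i : {additive N -> M}),
    [/\ bijective s, injective i, (forall x, i (t x) = s (i x)),
        (#|M| * #|one_minus_t_image t| = #|N| * #|L|)%N
      & one_minus_t_image s = i @: L].

Lemma base (N : finZmodType) (t : {additive N -> N}) (L : {set N}) :
  bijective t -> L = one_minus_t_image t -> Pgen t L.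
Proof.
move=> tb ->; exists N, t, idfun; split => //.
by rewrite imset_id.
Qed.

Lemma gen (n : nat) : forall (N : finZmodType) (t : {additive N -> N}), bijective t ->
  forall L : {set N}, (forall a b, a \in L -> b \in L -> a + b \in L) ->
  one_minus_t_image t \subset L ->
  (#|L| - #|one_minus_t_image t| <= n)%N -> Pgen t L.
Proof.
elim: n => [|n IH] N t tb L Lc KL hn.
  apply: base => //; apply/eqP; rewrite eq_sym eqEcard KL /=.
  by rewrite -subn_eq0 -leqn0.
have [LK|nLK] := boolP (L \subset one_minus_t_image t).
  by apply: base => //; apply/eqP; rewrite eqEsubset LK KL.
case/subsetPn: nLK => x xL xK.
set K := one_minus_t_image t.
have exP : exists m, (0 < m)%N && (x *+ m \in K).
  exists #[x]%g; rewrite order_gt0 /= -FinRing.zmodXgE expg_order.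
  exact: K0.
pose d := ex_minn exP.
have [dP dmin] : ((0 < d)%N && (x *+ d \in K)) /\
    (forall m, (0 < m)%N && (x *+ m \in K) -> (d <= m)%N).
  by rewrite /d; case: ex_minnP.
clearbody d.
have d1 : (1 < d)%N.
  case/andP: dP; case: d dmin => [|[|d]] //= _ _; by rewrite mulr1n (negbTE xK).
case: d dP dmin d1 => [|d'] // dP dmin d1.
case/andP: dP => _ /imsetP [k0 _ hk0].
have hk : k0 - t k0 = x *+ d'.+1 by rewrite hk0.
have Kpos : (0 < #|K|)%N by apply/card_gt0P; exists 0; exact: K0.
have xmL : forall m, x *+ m \in L.
  elim=> [|m IHm]; first by rewrite mulr0n; apply: (subsetP KL); exact: K0.
  by rewrite mulrS; apply: Lc.
pose K1 := [set a - t a + x *+ (nat_of_ord j) | a in [set: N], j in [set: 'I_d'.+1]].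
have K1L : K1 \subset L.
  apply/subsetP => y /imset2P [a j _ _ ->]; apply: Lc; last exact: xmL.
  by apply: (subsetP KL); apply/imsetP; exists a.
have key : forall a b : nat, (a < d'.+1)%N -> (b < d'.+1)%N -> (a <= b)%N ->
    x *+ b - x *+ a \in K -> a = b.
  move=> a b ha hb hab; rewrite -mulrnBr // => hK.
  case: (posnP (b - a)%N) => [|hpos]; first by lia.
  have := dmin (b - a)%N; rewrite hpos hK => /(_ isT); lia.
have cardK1 : #|K1| = (#|K| * d'.+1)%N.
  have -> : K1 = (fun k (j : 'I_d'.+1) => k + x *+ j) @2: (K, [set: 'I_d'.+1]).
    apply/setP=> y; apply/imset2P/imset2P => -[a j aI jI ->].
      by exists (a - t a) j => //; apply/imsetP; exists a.
    by case/imsetP: aI => u _ ->; exists u j.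
  rewrite curry_imset2X card_in_imset ?cardsX ?cardsT ?card_ord //.
  move=> [k j] [k' j'] /setXP [kK _] /setXP [k'K _] /= e.
  have e1 : x *+ j - x *+ j' = k' - k.
    by rewrite -[x *+ j](addKr k) e addrA addrK addrC.
  have e2 : x *+ j' - x *+ j = k - k'.
    by rewrite -opprB e1 opprB.
  have jj : j = j'.
    apply: ord_inj; case: (leqP j j') => h.
      by apply: key; rewrite ?ltn_ord // e2 KB.
    by apply/esym/key; rewrite ?ltn_ord ?(ltnW h) // e1 KB.
  by move: e; rewrite jj => /addIr ->.
pose i1 := ei d' k0.
have i1inj : injective i1 := @ei_inj N d' k0.
have := IH _ (es_ hk) (es_bij hk tb) (i1 @: L).
case.
- move=> a b /imsetP [u uL ->] /imsetP [v vL ->]; apply/imsetP; exists (u + v).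
    exact: Lc.
  by rewrite /i1 raddfD.
- by rewrite es_image; apply: imsetS.
- rewrite es_image !card_imset // cardK1.
  have : (#|K| * d'.+1 >= #|K| + #|K|)%N.
    by rewrite mulnS leq_add2l leq_pmulr //; lia.
  move: hn Kpos; rewrite -/K; lia.
move=> M [s [i [sb ii it hc hi]]].
exists M, s, (i \o i1); split => //.
- by move=> a b /ii /i1inj.
- by move=> a /=; rewrite /i1 (ei_t hk) it.
- move: hc; rewrite es_image !(card_imset _ i1inj) -/K1 cardK1 card_ext => hc.
  apply/eqP; rewrite -(eqn_pmul2r (ltn0Sn d')); apply/eqP.
  by rewrite -mulnA hc mulnAC.
  by rewrite hi -imset_comp.
Qed.

Lemma index_zmod (V : finZmodType) (A : {set V}) : 0 \in A ->
  (forall a b, a \in A -> b \in A -> a + b \in A) ->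
  (#|[set: V] : A|)%g = (#|V| %/ #|A|)%N /\ (#|A| %| #|V|)%N.
Proof.
move=> A0 Ac; have gA : group_set A.
  by apply/group_setP; split => // a b aA bA; exact: Ac.
have sH : (Group gA) \subset [set: V]%G by exact: subsetT.
split; first by rewrite -(divgS sH) /= cardsT.
by rewrite -cardsT; exact: (cardSg sH).
Qed.

Close Scope ring_scope.
Unset Implicit Arguments.

Theorem theorem4p3 (N : finZmodType) (t : {additive N -> N}) (t_bij : bijective t)
    (l : nat) (hl : (#|[set: N] : one_minus_t_image t|)%g = l) :
  exists (M : finZmodType) (s : {additive M -> M}) (i : {additive N -> M}),
    [/\ bijective s,
        injective i,
        (forall x : N, i (t x) = s (i x)),
        (#|[set: M] : i @: [set: N]|)%g = l
      & one_minus_t_image s = i @: [set: N]].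
Proof.
have := @gen #|N| N t t_bij [set: N] (fun a b _ _ => in_setT _) (subsetT _).
case; first by rewrite cardsT leq_subr.
move=> M [s [i [sb ii it hc hi]]].
exists M, s, i; split => //.
have [hK dK] := index_zmod (K0 t) (@KD _ t).
have i0 : (0%R : M) \in i @: [set: N] by apply/imsetP; exists 0%R; rewrite ?inE ?raddf0.
have ic : forall a b, a \in i @: [set: N] -> b \in i @: [set: N] -> (a + b)%R \in i @: [set: N].
  move=> a b /imsetP [u _ ->] /imsetP [v _ ->]; apply/imsetP; exists (u + v)%R => //.
  by rewrite raddfD.
have [hI _] := index_zmod i0 ic.
rewrite hI (card_imset _ ii) cardsT -hl hK.
move: hc; rewrite cardsT => hc.
case/dvdnP: dK => q hN.
have Kpos : (0 < #|one_minus_t_image t|)%N by apply/card_gt0P; exists 0%R; exact: K0.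
have Npos : (0 < #|N|)%N by apply/card_gt0P; exists 0%R.
rewrite [in RHS]hN mulnK //.
have -> : #|M| = (#|N| * q)%N.
  apply/eqP; rewrite -(eqn_pmul2r Kpos); apply/eqP.
  by rewrite hc {2}hN mulnA.
by rewrite mulKn.
Qed.
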